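(* Let $a,b,c>0$ and consider the cubic polynomial $p_3(\lambda)=\lambda^3-b\lambda^2-(a+c)\lambda+cb$. Then $p_3$ has three distinct real roots $\lambda_0,\lambda_1,\lambda_2$ with the following properties: (1) they are given by $$\lambda_k=2\sqrt{\frac{3(a+c)+b^2}{9}}\cos\Big(\frac{\theta}{3}+\frac{2k\pi}{3}\Big)+\frac b3,\quad k=0,1,2,\qquad \cos\theta=\frac b2\,\frac{2b^2+9(a+c)-27c}{(3(a+c)+b^2)^{3/2}},\ \theta\in[0,\pi];$$ (2) $\lambda_0\in(\max(b,\sqrt c),+\infty)$, $\lambda_1\in(-\infty,-\sqrt c)$, $\lambda_2\in(0,\min(b,\sqrt c))$; (3) $b=\lambda_0+\lambda_1+\lambda_2$, $a+c=-(\lambda_1\lambda_2+\lambda_0\lambda_1+\lambda_0\lambda_2)$, $cb=-\lambda_0\lambda_1\lambda_2$; (4) $c-\lambda_0^2<0$, $c-\lambda_1^2<0$, $c-\lambda_2^2>0$, and $\lambda_2<|\lambda_1|<\lambda_0$. *)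

(* Defs.v *)
From Stdlib Require Import Reals Lra.
Open Scope R_scope.

Definition p3 (a b c x : R) : R := x ^ 3 - b * x ^ 2 - (a + c) * x + c * b.

Definition lam (a b c theta : R) (k : nat) : R :=
  2 * sqrt ((3 * (a + c) + b ^ 2) / 9) * cos (theta / 3 + 2 * INR k * PI / 3) + b / 3.

(* Main.v *)
Require Import Defs.
From Stdlib Require Import Reals.
From Stdlib Require Import Lra Lia Psatz.
Open Scope R_scope.

Lemma p3_cont a b c : continuity (p3 a b c).
Proof. unfold p3. apply derivable_continuous. reg. Qed.

Lemma vieta a b c r0 r1 r2 :
  p3 a b c r0 = 0 -> p3 a b c r1 = 0 -> p3 a b c r2 = 0 ->
  r0 <> r1 -> r0 <> r2 -> r1 <> r2 ->
  b = r0 + r1 + r2 /\ a + c = - (r1 * r2 + r0 * r1 + r0 * r2) /\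
  c * b = - (r0 * r1 * r2).
Proof.
  unfold p3. remember (a + c) as E. remember (c * b) as P.
  intros H0 H1 H2 n01 n02 n12.
  assert (F01 : r0^2 + r0*r1 + r1^2 - b*(r0+r1) - E = 0).
  { assert (Hf : (r0 - r1) * (r0^2 + r0*r1 + r1^2 - b*(r0+r1) - E) = 0).
    { transitivity ((r0 ^ 3 - b * r0 ^ 2 - E * r0 + P) - (r1 ^ 3 - b * r1 ^ 2 - E * r1 + P)).
      ring. rewrite H0, H1. ring. }
    destruct (Rmult_integral _ _ Hf) as [h|h]; [exfalso; apply n01; lra | exact h]. }
  assert (F02 : r0^2 + r0*r2 + r2^2 - b*(r0+r2) - E = 0).
  { assert (Hf : (r0 - r2) * (r0^2 + r0*r2 + r2^2 - b*(r0+r2) - E) = 0).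
    { transitivity ((r0 ^ 3 - b * r0 ^ 2 - E * r0 + P) - (r2 ^ 3 - b * r2 ^ 2 - E * r2 + P)).
      ring. rewrite H0, H2. ring. }
    destruct (Rmult_integral _ _ Hf) as [h|h]; [exfalso; apply n02; lra | exact h]. }
  assert (Hb : b = r0 + r1 + r2).
  { assert (Hf : (r1 - r2) * (r0 + r1 + r2 - b) = 0).
    { transitivity ((r0^2 + r0*r1 + r1^2 - b*(r0+r1) - E) - (r0^2 + r0*r2 + r2^2 - b*(r0+r2) - E)).
      ring. rewrite F01, F02. ring. }
    destruct (Rmult_integral _ _ Hf) as [h|h]; [exfalso; apply n12; lra | lra]. }
  assert (HE : E = - (r1 * r2 + r0 * r1 + r0 * r2)).
  { rewrite Hb in F01. lra. }
  split; [exact Hb|]. split; [exact HE|].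
  rewrite Hb, HE in H0. lra.
Qed.

Lemma factor a b c r0 r1 r2 x :
  b = r0 + r1 + r2 -> a + c = - (r1 * r2 + r0 * r1 + r0 * r2) ->
  c * b = - (r0 * r1 * r2) ->
  p3 a b c x = (x - r0) * (x - r1) * (x - r2).
Proof.
  intros Hb HE HP. unfold p3. rewrite HP, HE, Hb. ring.
Qed.

Lemma cos3 x : cos (3 * x) = 4 * cos x ^ 3 - 3 * cos x.
Proof.
  replace (3 * x) with (2 * x + x) by ring.
  rewrite cos_plus, cos_2a_cos, sin_2a.
  pose proof (sin2_cos2 x) as H. unfold Rsqr in H.
  assert (Hs : sin x * sin x = 1 - cos x * cos x) by lra.
  transitivity ((2 * cos x * cos x - 1) * cos x - 2 * cos x * (sin x * sin x)). ring.
  rewrite Hs. ring.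
Qed.

Lemma cos_2PI_minus y : cos (2 * PI - y) = cos y.
Proof. rewrite cos_minus, cos_2PI, sin_2PI. ring. Qed.

Lemma cos_plus_2PI y : cos (y + 2 * PI) = cos y.
Proof. rewrite cos_plus, cos_2PI, sin_2PI. ring. Qed.

Lemma cos_2PI3 : cos (2 * PI / 3) = - (1/2).
Proof.
  replace (2 * PI / 3) with (PI - PI / 3) by field.
  rewrite cos_minus, cos_PI, sin_PI, cos_PI3. ring.
Qed.

Lemma disc_id r0 r1 r2 :
  let b := r0 + r1 + r2 in let E := - (r1 * r2 + r0 * r1 + r0 * r2) in
  let P := - (r0 * r1 * r2) in
  4 * (3 * E + b ^ 2) ^ 3 - (2 * b ^ 3 + 9 * b * E - 27 * P) ^ 2
  = 27 * ((r0 - r1) ^ 2 * (r0 - r2) ^ 2 * (r1 - r2) ^ 2).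
Proof. intros b E P. unfold b, E, P. ring. Qed.

Theorem proposition1 (a b c : R) (ha : 0 < a) (hb : 0 < b) (hc : 0 < c) :
  exists (theta l0 l1 l2 : R),
    (* three distinct real roots, and they are all the roots *)
    p3 a b c l0 = 0 /\ p3 a b c l1 = 0 /\ p3 a b c l2 = 0 /\
    l0 <> l1 /\ l0 <> l2 /\ l1 <> l2 /\
    (forall x, p3 a b c x = 0 -> x = l0 \/ x = l1 \/ x = l2) /\
    (* (1) trigonometric formula *)
    0 <= theta <= PI /\
    cos theta = b / 2 * (2 * b ^ 2 + 9 * (a + c) - 27 * c)
                / Rpower (3 * (a + c) + b ^ 2) (3 / 2) /\
    l0 = lam a b c theta 0 /\ l1 = lam a b c theta 1 /\ l2 = lam a b c theta 2 /\
    (* (2) location *)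
    Rmax b (sqrt c) < l0 /\ l1 < - sqrt c /\ 0 < l2 < Rmin b (sqrt c) /\
    (* (3) Vieta *)
    b = l0 + l1 + l2 /\
    a + c = - (l1 * l2 + l0 * l1 + l0 * l2) /\
    c * b = - (l0 * l1 * l2) /\
    (* (4) *)
    c - l0 ^ 2 < 0 /\ c - l1 ^ 2 < 0 /\ c - l2 ^ 2 > 0 /\
    l2 < Rabs l1 < l0.
Proof.
  set (q := sqrt c).
  assert (hq : 0 < q) by (apply sqrt_lt_R0; lra).
  assert (hqq : q * q = c) by (apply sqrt_sqrt; lra).
  assert (Pq : p3 a b c q = - (a * q)).
  { unfold p3. replace (q ^ 3) with (c * q) by (rewrite <- hqq; ring).
    replace (q ^ 2) with c by (rewrite <- hqq; ring). ring. }
  assert (Pmq : p3 a b c (- q) = a * q).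
  { unfold p3. replace ((- q) ^ 3) with (- (c * q)) by (rewrite <- hqq; ring).
    replace ((- q) ^ 2) with c by (rewrite <- hqq; ring). ring. }
  assert (P0 : p3 a b c 0 = c * b) by (unfold p3; ring).
  assert (Pb : p3 a b c b = - (a * b)) by (unfold p3; ring).
  set (Y := q + a + c + 1).
  assert (PY : p3 a b c (- Y) < 0).
  { unfold p3. assert (Y * Y >= c) by (unfold Y; nra).
    assert (Y * Y > a + c) by (unfold Y; nra).
    assert (Y > 0) by (unfold Y; lra).
    assert (Y * (Y * Y) > (a + c) * Y) by nra.
    assert (b * (Y * Y) >= c * b) by nra.
    replace ((- Y) ^ 3) with (- (Y * (Y * Y))) by ring.
    replace ((- Y) ^ 2) with (Y * Y) by ring. lra. }
  set (X := q + b + a + c + 1).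
  assert (PX : p3 a b c X > 0).
  { unfold p3. assert (X > 1) by (unfold X; lra).
    assert (X * X > X) by nra.
    assert (X - b >= a + c + 1) by (unfold X; lra).
    assert (X * X * (X - b) >= X * X * (a + c + 1)) by nra.
    assert (X * X * (a + c + 1) > X * (a + c)) by nra.
    assert (c * b > 0) by nra.
    replace (X ^ 3) with (X * X * (X - b) + b * (X * X)) by ring.
    replace (X ^ 2) with (X * X) by ring. lra. }
  destruct (IVT_cor (p3 a b c) (- Y) (- q) (p3_cont a b c)) as [r1 [Hr1 Er1]].
  { unfold Y; lra. } { rewrite Pmq. assert (0 < a * q) by nra. nra. }
  assert (r1 < - q).
  { destruct (Rle_lt_or_eq_dec r1 (-q)) as [h|h]; [lra|exact h|].
    rewrite h, Pmq in Er1. nra. }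
  set (mn := Rmin b q).
  assert (Pmn : p3 a b c mn < 0).
  { unfold mn, Rmin. destruct (Rle_dec b q); [rewrite Pb|rewrite Pq]; nra. }
  assert (mnpos : 0 < mn) by (unfold mn, Rmin; destruct (Rle_dec b q); lra).
  destruct (IVT_cor (p3 a b c) 0 mn (p3_cont a b c)) as [r2 [Hr2 Er2]].
  { lra. } { rewrite P0. assert (0 < c * b) by nra. nra. }
  assert (0 < r2 < mn).
  { split.
    - destruct (Rle_lt_or_eq_dec 0 r2) as [h|h]; [lra|exact h|].
      rewrite <- h, P0 in Er2. nra.
    - destruct (Rle_lt_or_eq_dec r2 mn) as [h|h]; [lra|exact h|].
      rewrite h in Er2. lra. }
  set (mx := Rmax b q).
  assert (Pmx : p3 a b c mx < 0).
  { unfold mx, Rmax. destruct (Rle_dec b q); [rewrite Pq|rewrite Pb]; nra. }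
  assert (mxX : mx < X) by (unfold mx, X, Rmax; destruct (Rle_dec b q); lra).
  destruct (IVT_cor (p3 a b c) mx X (p3_cont a b c)) as [r0 [Hr0 Er0]].
  { lra. } { nra. }
  assert (mx < r0).
  { destruct (Rle_lt_or_eq_dec mx r0) as [h|h]; [lra|exact h|].
    rewrite <- h in Er0. lra. }
  assert (mnb : mn <= b /\ mn <= q) by (unfold mn, Rmin; destruct (Rle_dec b q); lra).
  assert (mxb : b <= mx /\ q <= mx) by (unfold mx, Rmax; destruct (Rle_dec b q); lra).
  assert (n01 : r0 <> r1) by lra.
  assert (n02 : r0 <> r2) by lra.
  assert (n12 : r1 <> r2) by lra.
  destruct (vieta a b c r0 r1 r2 Er0 Er1 Er2 n01 n02 n12) as [Vb [VE VP]].
  pose proof (factor a b c r0 r1 r2) as Fac.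
  set (S := 3 * (a + c) + b ^ 2).
  assert (hS : 0 < S) by (unfold S; nra).
  set (s := sqrt S).
  assert (hs : 0 < s) by (apply sqrt_lt_R0; lra).
  assert (hss : s * s = S) by (apply sqrt_sqrt; lra).
  assert (HR : Rpower S (3 / 2) = S * s).
  { replace (3 / 2) with (1 + / 2) by field. rewrite Rpower_plus, Rpower_1, Rpower_sqrt; auto. }
  set (N := 2 * b ^ 3 + 9 * b * (a + c) - 27 * (c * b)).
  set (K := b / 2 * (2 * b ^ 2 + 9 * (a + c) - 27 * c) / Rpower S (3 / 2)).
  set (D := 2 * (S * s)).
  assert (hD : 0 < D) by (unfold D; nra).
  assert (HK : K * D = N).
  { unfold K, D, N. rewrite HR. field. split; lra. }
  assert (Hd : 4 * S ^ 3 - N ^ 2 = 27 * ((r0 - r1) ^ 2 * (r0 - r2) ^ 2 * (r1 - r2) ^ 2)).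
  { unfold S, N. rewrite VP, VE. rewrite Vb. exact (disc_id r0 r1 r2). }
  assert (Hpos : 0 < (r0 - r1) ^ 2 * (r0 - r2) ^ 2 * (r1 - r2) ^ 2).
  { assert (0 < (r0 - r1) ^ 2) by nra. assert (0 < (r0 - r2) ^ 2) by nra.
    assert (0 < (r1 - r2) ^ 2) by nra.
    apply Rmult_lt_0_compat; [apply Rmult_lt_0_compat|]; assumption. }
  assert (HDD : D * D = 4 * S ^ 3) by (unfold D; rewrite <- hss; ring).
  assert (HN : - D < N < D) by nra.
  assert (HK1 : -1 < K < 1) by nra.
  set (th := acos K).
  assert (Hcth : cos th = K) by (apply cos_acos; lra).
  assert (Hth : 0 < th < PI).
  { pose proof (acos_bound K) as hb'. fold th in hb'. split.
    - destruct (Rle_lt_or_eq_dec 0 th) as [h|h]; [lra|exact h|].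
      rewrite <- h, cos_0 in Hcth. lra.
    - destruct (Rle_lt_or_eq_dec th PI) as [h|h]; [lra|exact h|].
      rewrite h, cos_PI in Hcth. lra. }
  set (m := s / 3).
  assert (Hm : sqrt (S / 9) = m).
  { unfold m, s. rewrite sqrt_div; [|lra|lra]. replace 9 with (3 * 3) by ring.
    rewrite sqrt_square; lra. }
  assert (Root : forall phi, cos (3 * phi) = K -> p3 a b c (2 * m * cos phi + b / 3) = 0).
  { intros phi Hphi. rewrite cos3 in Hphi.
    set (co := cos phi) in *.
    assert (HE : a + c = (s * s - b ^ 2) / 3) by (rewrite hss; unfold S; field).
    assert (Hid : p3 a b c (2 * m * co + b / 3) =
                  2 * s ^ 3 / 27 * (4 * co ^ 3 - 3 * co) - N / 27).
    { unfold p3, N, m. rewrite HE. field. }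
    rewrite Hid, Hphi.
    assert (HKN : K = N / D) by (rewrite <- HK; field; lra).
    rewrite HKN. unfold D. rewrite <- hss. field. lra. }
  assert (Lam : forall k, lam a b c th k = 2 * m * cos (th / 3 + 2 * INR k * PI / 3) + b / 3).
  { intro k. unfold lam. fold S. rewrite Hm. reflexivity. }
  pose proof PI_RGT_0 as hpi.
  set (L0 := lam a b c th 0).
  assert (EL0 : L0 = 2 * m * cos (th / 3) + b / 3).
  { unfold L0. rewrite Lam. replace (th / 3 + 2 * INR 0 * PI / 3) with (th / 3) by (simpl INR; field). reflexivity. }
  assert (C0 : 1 / 2 < cos (th / 3)).
  { rewrite <- cos_PI3. apply cos_decreasing_1; lra. }
  assert (R0 : p3 a b c L0 = 0).
  { rewrite EL0. apply Root. replace (3 * (th / 3)) with th by field. exact Hcth. }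
  set (L1 := lam a b c th 1).
  assert (EL1 : L1 = 2 * m * cos (th / 3 + 2 * PI / 3) + b / 3).
  { unfold L1. rewrite Lam. replace (th / 3 + 2 * INR 1 * PI / 3) with (th / 3 + 2 * PI / 3) by (simpl INR; field). reflexivity. }
  assert (C1 : cos (th / 3 + 2 * PI / 3) < - (1 / 2)).
  { rewrite <- cos_2PI3. apply cos_decreasing_1; lra. }
  assert (R1 : p3 a b c L1 = 0).
  { rewrite EL1. apply Root. replace (3 * (th / 3 + 2 * PI / 3)) with (th + 2 * PI) by field.
    rewrite cos_plus_2PI. exact Hcth. }
  set (L2 := lam a b c th 2).
  assert (EL2 : L2 = 2 * m * cos (2 * PI / 3 - th / 3) + b / 3).
  { unfold L2. rewrite Lam. rewrite <- (cos_2PI_minus (2 * PI / 3 - th / 3)).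
    replace (th / 3 + 2 * INR 2 * PI / 3) with (2 * PI - (2 * PI / 3 - th / 3)) by (simpl INR; field).
    reflexivity. }
  assert (C2 : - (1 / 2) < cos (2 * PI / 3 - th / 3) < 1 / 2).
  { split.
    - rewrite <- cos_2PI3. apply cos_decreasing_1; lra.
    - rewrite <- cos_PI3. apply cos_decreasing_1; lra. }
  assert (R2 : p3 a b c L2 = 0).
  { rewrite EL2. apply Root. replace (3 * (2 * PI / 3 - th / 3)) with (2 * PI - th) by field.
    rewrite cos_2PI_minus. exact Hcth. }
  assert (hm : 0 < m) by (unfold m; lra).
  assert (O0 : b / 3 + m < L0) by (rewrite EL0; nra).
  assert (O1 : L1 < b / 3 - m) by (rewrite EL1; nra).
  assert (O2 : b / 3 - m < L2 < b / 3 + m) by (rewrite EL2; split; nra).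
  assert (In3 : forall x, p3 a b c x = 0 -> x = r0 \/ x = r1 \/ x = r2).
  { intros x Hx. rewrite (Fac x Vb VE VP) in Hx.
    destruct (Rmult_integral _ _ Hx) as [h|h].
    - destruct (Rmult_integral _ _ h) as [h'|h']; [left|right;left]; lra.
    - right; right; lra. }
  destruct (In3 _ R0) as [e0|[e0|e0]]; destruct (In3 _ R1) as [e1|[e1|e1]];
    destruct (In3 _ R2) as [e2|[e2|e2]]; try (exfalso; lra).
  exists th, r0, r1, r2.
  assert (hqc : sqrt c = q) by reflexivity.
  fold mn mx L0 L1 L2.
  assert (Hab : Rabs r1 = - r1) by (apply Rabs_left; lra).
  rewrite Hab.
  split; [auto|]. split; [auto|]. split; [auto|].
  split; [auto|]. split; [auto|]. split; [auto|].
  split; [auto|]. split; [lra|]. split; [exact Hcth|].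
  split; [lra|]. split; [lra|]. split; [lra|].
  split; [lra|]. split; [lra|]. split; [lra|].
  split; [exact Vb|]. split; [exact VE|]. split; [exact VP|].
  split; [nra|]. split; [nra|]. split; [nra|].
  lra.
Qed.
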